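(* Let $A$ be a finite alphabet and let $w=\mu^{\omega}(a)$, where $a\in A$ and $\mu$ is an $r$-uniform morphism with $r\ge 2$ that is prolongable on $a$. Suppose $w$ is aperiodic and uniformly recurrent. Then there is a constant $c$, depending only on $w$, such that for every positive integer $k$ and every index $i\ge 0$ of $w$, there is a $k$-antipower with block length at most $ck$ starting at position $i$ of $w$.
   Context: Words are indexed from $0$; infinite words are infinite to the right. A $k$-antipower is a word that is the concatenation of $k$ pairwise distinct words (blocks) of equal length; that common length is the block length. A morphism $\mu$ of $A^{\infty}=A^*\cup A^{\omega}$ satisfies $\mu(uv)=\mu(u)\mu(v)$ for finite $u$; it is $r$-uniform if $|\mu(b)|=r$ for all $b\in A$; it is prolongable on $a$ if $\mu(a)$ begins with $a$, in which case $\mu^{\omega}(a)$ is the infinite word having every $\mu^n(a)$ as a prefix. An infinite word is aperiodic if it has no periodic suffix. An infinite word $w$ is uniformly recurrent if for every integer $a$ there is an integer $b$ such that every length-$a$ substring (factor of consecutive letters) of $w$ occurs in every length-$b$ substring of $w$. *)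

(* Defs.v *)
From mathcomp Require Import all_boot.
Set Implicit Arguments. Unset Strict Implicit. Unset Printing Implicit Defensive.

(* Infinite words over A are functions nat -> A (indexed from 0). *)

Definition morph_ext (A : Type) (mu : A -> seq A) (u : seq A) : seq A :=
  flatten (map mu u).

Definition morph_iter (A : Type) (mu : A -> seq A) (n : nat) (u : seq A) : seq A :=
  iter n (morph_ext mu) u.

Definition uniform_morphism (A : Type) (mu : A -> seq A) (r : nat) : Prop :=
  forall b : A, size (mu b) = r.

Definition prolongable_on (A : Type) (mu : A -> seq A) (a : A) : Prop :=
  exists s, mu a = a :: s.

(* w = mu^omega(a): the infinite word having every mu^n(a) as a prefix *)
Definition is_fixed_point_word (A : Type) (mu : A -> seq A) (a : A) (w : nat -> A) : Prop :=
  forall n i, i < size (morph_iter mu n [:: a]) -> w i = nth a (morph_iter mu n [:: a]) i.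

Definition factor (A : Type) (w : nat -> A) (i len : nat) : seq A :=
  mkseq (fun j => w (i + j)) len.

Definition aperiodic (A : Type) (w : nat -> A) : Prop :=
  ~ exists p N, 0 < p /\ forall n, N <= n -> w (n + p) = w n.

Definition uniformly_recurrent (A : eqType) (w : nat -> A) : Prop :=
  forall l, exists b, forall i j,
    exists t, t + l <= b /\ factor w (j + t) l = factor w i l.

Definition antipower_at (A : eqType) (w : nat -> A) (i k m : nat) : Prop :=
  forall j1 j2, j1 < k -> j2 < k -> j1 <> j2 ->
    factor w (i + j1 * m) m <> factor w (i + j2 * m) m.

(* Main.v *)
Require Import Defs.
From mathcomp Require Import all_boot zify.
From Stdlib Require Import Classical.
Set Implicit Arguments. Unset Strict Implicit. Unset Printing Implicit Defensive.

Definition eqf (T : Type) (z : nat -> T) x y n := forall s, s < n -> z (x + s) = z (y + s).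

Lemma eqf_refl T (z : nat -> T) x n : eqf z x x n.
Proof. by []. Qed.
Lemma eqf_sym T (z : nat -> T) x y n : eqf z x y n -> eqf z y x n.
Proof. by move=> H s hs; rewrite H. Qed.
Lemma eqf_trans T (z : nat -> T) x y u n : eqf z x y n -> eqf z y u n -> eqf z x u n.
Proof. by move=> H1 H2 s hs; rewrite H1 // H2. Qed.
Lemma eqf_le T (z : nat -> T) x y n m : m <= n -> eqf z x y n -> eqf z x y m.
Proof. by move=> hm H s hs; apply: H; lia. Qed.
Lemma eqf_shift T (z : nat -> T) x y n k m : k + m <= n -> eqf z x y n -> eqf z (x + k) (y + k) m.
Proof. by move=> hm H s hs; rewrite -!addnA; apply: H; lia. Qed.

Definition FPz T (z : nat -> T) r := forall n n' j, j < r -> z n = z n' -> z (r * n + j) = z (r * n' + j).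
Definition URz T (z : nat -> T) := forall l, exists b, forall i j, exists t, t + l <= b /\ eqf z (j + t) i l.
Definition AmbS T (z : nat -> T) r sg n := forall q, exists q', eqf z (r * q') (r * q + sg) (r * n).

Lemma FPblock T (z : nat -> T) r a b n : 0 < r -> FPz z r -> eqf z a b n -> eqf z (r * a) (r * b) (r * n).
Proof.
move=> r0 Hf H s hs.
have -> : s = r * (s %/ r) + s %% r by rewrite {1}(divn_eq s r) mulnC.
have hq : s %/ r < n by rewrite ltn_divLR // mulnC.
rewrite !addnA -!mulnDr; apply: Hf; first by rewrite ltn_pmod.
exact: H.
Qed.

Definition fac T (z : nat -> T) q n := mkseq (fun s => z (q + s)) n.

Lemma fac_eqf (T : eqType) (z : nat -> T) x y n : fac z x n = fac z y n -> eqf z x y n.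
Proof.
move=> E s hs; have := congr1 (fun l => nth (z 0) l s) E.
by rewrite /fac !nth_mkseq.
Qed.

Lemma eqf_fac (T : eqType) (z : nat -> T) x y n : eqf z x y n -> fac z x n = fac z y n.
Proof.
move=> H; apply: (@eq_from_nth _ (z 0)); rewrite ?size_mkseq // => s hs.
by rewrite !nth_mkseq // H.
Qed.

Lemma take_fac T (z : nat -> T) q n : take n (fac z q n.+1) = fac z q n.
Proof. by rewrite /fac /mkseq -map_take take_iota (minn_idPl (leqnSn n)). Qed.

Lemma eqf_step T (z : nat -> T) x y n : eqf z x y n -> z (x + n) = z (y + n) -> eqf z x.+1 y.+1 n.
Proof.
move=> H Hn s hs; case: (ltnP s.+1 n) => h.
  by rewrite !addSnnS H.
have -> : x.+1 + s = x + n by lia.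
by have -> : y.+1 + s = y + n by lia.
Qed.

Lemma MHw (T : eqType) (z : nat -> T) : aperiodic z ->
  forall n (W : seq (seq T)), (forall q, fac z q n \in W) -> n.+1 <= size W.
Proof.
move=> Hap n; elim: n => [|n IH] W0 HW.
  by move: (HW 0); clear HW; case: W0.
set V := undup W0.
have HV : forall q, fac z q n.+1 \in V by move=> q; rewrite mem_undup.
have uV : uniq V by apply: undup_uniq.
apply: (@leq_trans (size V)); last by apply: size_undup.
case: (classic (exists q q', fac z q n = fac z q' n /\ fac z q n.+1 <> fac z q' n.+1)).
  move=> [q [q' [E N]]]; set y := fac z q' n.+1.
  have yV : y \in V by apply: HV.
  have := IH (map (take n) (rem y V)).
  rewrite size_map size_rem //.
  have hpos : 0 < size V by case: (V) yV.
  move=> H; suff: n.+1 <= (size V).-1 by lia.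
  apply: H => q2.
  have [Hy|Hy] := eqVneq (fac z q2 n.+1) y.
    rewrite -take_fac Hy /y take_fac -E -take_fac; apply: map_f.
    rewrite (mem_rem_uniq _ uV) inE HV andbT; apply/eqP => Exy; exact: N.
  rewrite -take_fac; apply: map_f.
  by rewrite (mem_rem_uniq _ uV) inE HV andbT Hy.
move=> Hno.
have ext : forall q q', eqf z q q' n -> z (q + n) = z (q' + n).
  move=> q q' H.
  have E : fac z q n.+1 = fac z q' n.+1.
    apply: NNPP => Hne; apply: Hno; exists q, q'; split => //; exact: eqf_fac.
  by have := fac_eqf E (ltnSn n).
set S := [seq fac z q n | q <- iota 0 n.+2].
have sub : {subset S <= map (take n) V}.
  move=> x /mapP [q _ ->]; rewrite -take_fac; apply: map_f; exact: HV.
case: (boolP (uniq S)) => uS.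
  by have := uniq_leq_size uS sub; rewrite size_map /S size_map size_iota.
case/(uniqPn [::]): uS => i [j [hij hj]].
rewrite /S size_map size_iota in hj.
rewrite !(nth_map 0) ?size_iota //; last by lia.
rewrite !nth_iota //; last by lia.
rewrite !add0n => /fac_eqf Hij.
exfalso; apply: Hap; exists (j - i), (i + n); split; first by lia.
have Hm : forall m, eqf z (i + m) (j + m) n.
  elim=> [|m IHm]; first by rewrite !addn0.
  rewrite !addnS; apply: eqf_step => //; exact: ext.
move=> x hx.
have -> : x = i + (x - i - n) + n by lia.
have -> : i + (x - i - n) + n + (j - i) = j + (x - i - n) + n by lia.
by rewrite (ext _ _ (Hm _)).
Qed.

Lemma AmbS_le T (z : nat -> T) r sg n n' : n <= n' -> AmbS z r sg n' -> AmbS z r sg n.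
Proof.
move=> hn H q; have [q' Hq] := H q; exists q'; apply: eqf_le Hq; exact: leq_mul.
Qed.

Lemma fmax (P : nat -> nat -> Prop) K :
  (forall x, x < K -> exists n, forall n', n <= n' -> P x n') ->
  exists N, forall x, x < K -> forall n', N <= n' -> P x n'.
Proof.
elim: K => [|K IH] H; first by exists 0.
have [N1 HN1] : exists N, forall x, x < K -> forall n', N <= n' -> P x n'.
  by apply: IH => x hx; apply: H; lia.
have [N2 HN2] := H K (ltnSn K).
exists (maxn N1 N2) => x hx n' hn'.
case: (ltnP x K) => hxK.
  by apply: HN1 => //; lia.
have -> : x = K by lia.
by apply: HN2; lia.
Qed.

Lemma decomp r p : 0 < r -> exists u s, p = u * r + s /\ s < r /\ p %% r = s.
Proof.
move=> r0; exists (p %/ r), (p %% r); split; first exact: divn_eq.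
by split=> //; apply: ltn_pmod.
Qed.

Lemma amb_from T (z : nat -> T) r : 2 <= r -> FPz z r -> URz z ->
  (forall L, exists p p', eqf z p p' L /\ p %% r <> p' %% r) ->
  forall n, exists rho, 0 < rho < r /\ AmbS z r rho n.
Proof.
move=> hr Hf Hu Hbad n.
have r0 : 0 < r by lia.
have [b Hb] := Hu n.+1.
have [p [p' [E Hne]]] := Hbad (r * (b + n + 1)).
have [u' [s' [hp' [hs' hps']]]] := decomp p' r0.
have [u [s [hp [hs hps]]]] := decomp p r0.
rewrite hps hps' in Hne.
pose D := r - s'.
pose t' := u'.+1.
have hD : r * t' = p' + D by rewrite /t' /D hp'; lia.
have [q0 [rho [hq0 [hrho hrho0]]]] : exists q0 rho, p + D = q0 * r + rho /\ rho < r /\ 0 < rho.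
  exists ((p + D) %/ r), ((p + D) %% r); split; first by apply: divn_eq.
  split; first by apply: ltn_pmod.
  have -> : (p + D) %% r = (s + D) %% r by rewrite hp -addnA modnMDl.
  case: (leqP s' s) => h.
    have -> : s + D = 1 * r + (s - s') by rewrite /D; lia.
    rewrite modnMDl modn_small; lia.
  rewrite modn_small /D; lia.
exists rho; split; first by rewrite hrho hrho0.
move=> q.
have [t [ht Ht]] := Hb q q0.
exists (t' + t).
apply: (@eqf_trans _ _ _ (r * (q0 + t) + rho)).
  move=> x hx.
  have -> : r * (t' + t) + x = p' + (D + r * t + x) by rewrite mulnDr hD; lia.
  rewrite -E; last by rewrite /D; nia.
  congr z; rewrite mulnDr; lia.
apply: eqf_shift; last exact: FPblock r0 Hf Ht.
rewrite mulnS; lia.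
Qed.

Lemma AmbS_mul T (z : nat -> T) r sg : 0 < r -> (forall n, AmbS z r sg n) ->
  forall a n, AmbS z r (a * sg) n.
Proof.
move=> r0 H; elim=> [|a IH] n q.
  by exists q; rewrite mul0n addn0.
have [q1 Hq1] := IH (n + sg) q.
have [q' Hq'] := H n q1.
exists q'; apply: eqf_trans Hq' _.
have -> : r * q + a.+1 * sg = r * q + a * sg + sg by rewrite mulSn; lia.
apply: eqf_shift Hq1.
rewrite mulnDr; nia.
Qed.

Lemma AmbS_red T (z : nat -> T) r beta g : 0 < r -> g <= r -> FPz z r -> URz z ->
  (forall n, AmbS z r (r * beta + g) n) -> forall n, AmbS z r g n.
Proof.
move=> r0 hg Hf Hu H n q.
have [b Hb] := Hu n.+1.
have [t [_ Ht]] := Hb q beta.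
have [q' Hq'] := H n t.
exists q'; apply: eqf_trans Hq' _.
have -> : r * t + (r * beta + g) = r * (beta + t) + g by rewrite mulnDr; lia.
apply: eqf_shift (FPblock r0 Hf Ht).
rewrite mulnS; lia.
Qed.

Definition cover T (z : nat -> T) (Q : seq nat) n := forall q, exists q0, q0 \in Q /\ eqf z q q0 n.

Lemma CB T (z : nat -> T) r g : 0 < g -> g <= r -> FPz z r ->
  (forall h n, AmbS z r (h * g) n) ->
  forall Q n, cover z Q n.+1 -> cover z [seq r * q0 + s | s <- iota 0 g, q0 <- Q] (r * n).+1.
Proof.
move=> g0 hg Hf Ha Q n HQ q.
have r0 : 0 < r by lia.
have [t [s0 [hq [hs0 _]]]] := decomp q r0.
have [h [s [hs0' [hs _]]]] := decomp s0 g0.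
have [t'' Ht''] := Ha h n.+1 t.
have [q0 [Hq0 Eq0]] := HQ t''.
exists (r * q0 + s); split.
  by apply: (allpairs_f (fun s q0 => r * q0 + s)); rewrite // mem_iota.
have -> : q = r * t + h * g + s by rewrite hq hs0'; lia.
apply: (@eqf_trans _ _ _ (r * t'' + s)).
  apply: eqf_shift (eqf_sym Ht''); rewrite mulnS; lia.
apply: eqf_shift (FPblock r0 Hf Eq0); rewrite mulnS; lia.
Qed.

Lemma baseB (T : eqType) (z : nat -> T) r : 2 <= r -> FPz z r -> URz z -> aperiodic z ->
  exists L, forall p p', eqf z p p' L -> p %% r = p' %% r.
Proof.
move=> hr Hf Hu Hap.
have r0 : 0 < r by lia.
apply: NNPP => HL.
have Hbad : forall L, exists p p', eqf z p p' L /\ p %% r <> p' %% r.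
  move=> L; apply: NNPP => HN; apply: HL; exists L => p p' E.
  apply: NNPP => Hne; apply: HN; exists p, p'; done.
have [rho [hrho Hrho]] : exists rho, 0 < rho < r /\ forall n, AmbS z r rho n.
  apply: NNPP => Hno.
  have [N HN] : exists N, forall x, x < r -> forall n', N <= n' -> (0 < x -> ~ AmbS z r x n').
    apply: fmax => x hx.
    case: (posnP x) => [->|x0]; first by exists 0.
    have [n Hn] : exists n, ~ AmbS z r x n.
      apply: NNPP => Hn; apply: Hno; exists x; split; first by rewrite x0 hx.
      move=> n; apply: NNPP => Hn'; apply: Hn; exists n; done.
    exists n => n' hn' _ Ha; apply: Hn; exact: AmbS_le hn' Ha.
  have [x [hx Hx]] := amb_from hr Hf Hu Hbad N.
  case/andP: hx => x0 xr.
  exact: (HN x xr N (leqnn N) x0 Hx).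
case/andP: hrho => rho0 rhor.
case: (egcdnP r rho0) => km kn Hb _.
set g := gcdn rho r in Hb.
have g0 : 0 < g by rewrite gcdn_gt0 rho0.
have gr : g %| r by apply: dvdn_gcdr.
have grho : g <= rho by apply: dvdn_leq => //; apply: dvdn_gcdl.
have g2 : 2 * g <= r.
  case/dvdnP: gr => c hc.
  have c2 : 2 <= c by move: hc; case: c => [|[|c]] //; lia.
  rewrite hc; nia.
have Hg : forall n, AmbS z r g n.
  apply: (@AmbS_red _ _ _ kn) => //; first by lia.
  move=> n; rewrite mulnC -Hb; exact: AmbS_mul.
have Hhg := AmbS_mul r0 Hg.
have [b2 Hb2] := Hu 2.
have Hit : forall e, exists Q, cover z Q (r ^ e).+1 /\ size Q <= g ^ e * b2.
  elim=> [|e [Q [HQ hQ]]].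
    exists (iota 0 b2); split; last by rewrite expn0 mul1n size_iota.
    move=> q; have [t [ht Ht]] := Hb2 q 0.
    exists t; split; first by rewrite mem_iota; lia.
    exact: eqf_sym Ht.
  exists [seq r * q0 + s | s <- iota 0 g, q0 <- Q]; split.
    rewrite expnS; apply: CB => //; lia.
  rewrite size_allpairs size_iota expnS -mulnA; exact: leq_mul.
have [Q [HQ hQ]] := Hit b2.
have MH : (r ^ b2).+2 <= size Q.
  have := MHw Hap (W := [seq fac z q0 (r ^ b2).+1 | q0 <- Q]).
  rewrite size_map; apply => q.
  have [q0 [Hq0 E]] := HQ q.
  by rewrite (eqf_fac E); apply: map_f.
have hb2 : b2 < 2 ^ b2 by apply: ltn_expl.
have b20 : 0 < b2 by have [t [ht _]] := Hb2 0 0; lia.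
have hgr : 2 ^ b2 * g ^ b2 <= r ^ b2 by rewrite -expnMn leq_exp2r.
have gpos : 0 < g ^ b2 by rewrite expn_gt0 g0.
nia.
Qed.

Definition INJz T (z : nat -> T) r := forall n n', (forall j, j < r -> z (r * n + j) = z (r * n' + j)) -> z n = z n'.

Lemma mod_mul_lift u u' m r s : u = u' %[mod m] -> u * r + s = u' * r + s %[mod m * r].
Proof.
move=> H.
rewrite {1}(divn_eq u m) {1}(divn_eq u' m) H !mulnDl -!mulnA -!addnA.
by rewrite [m * r]mulnC !modnMDl.
Qed.

Lemma lift T (z : nat -> T) r L : 2 <= r -> INJz z r ->
  (forall p p', eqf z p p' L -> p %% r = p' %% r) ->
  forall e p p', eqf z p p' ((L + 2) * r ^ e - 2) -> p = p' %[mod r ^ e].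
Proof.
move=> hr Hi HB; elim=> [|e IH] p p' E; first by rewrite expn0 !modn1.
have r0 : 0 < r by lia.
have hpe : r <= r ^ e.+1 by rewrite expnS; apply: leq_pmulr; rewrite expn_gt0 r0.
have Hr : p %% r = p' %% r.
  apply: HB; apply: eqf_le E.
  have : (L + 2) * 2 <= (L + 2) * r ^ e.+1 by apply: leq_mul => //; lia.
  lia.
have [u [s [hp [hs hps]]]] := decomp p r0.
have [u' [s' [hp' [hs' hps']]]] := decomp p' r0.
have ss : s' = s by lia.
subst s'.
have hX : (L + 2) * r ^ e.+1 = (L + 2) * r ^ e * r by rewrite expnS; lia.
set X := (L + 2) * r ^ e in IH hX.
have Hu : eqf z u.+1 u'.+1 (X - 2).
  move=> s2 hs2; apply: Hi => j hj.
  have e1 : r * (u.+1 + s2) + j = p + (r - s + r * s2 + j) by rewrite hp mulnDr mulnS; lia.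
  have e2 : r * (u'.+1 + s2) + j = p' + (r - s + r * s2 + j) by rewrite hp' mulnDr mulnS; lia.
  rewrite e1 e2; apply: E; rewrite hX.
  have h1 : r * s2.+2 <= r * X.-1 by rewrite leq_mul2l; apply/orP; right; lia.
  have h2 : r * X.-1 = r * X - r by rewrite -subn1 mulnBr muln1.
  rewrite mulnS mulnS in h1; lia.
have := IH _ _ Hu.
move=> H.
have Huu : u = u' %[mod r ^ e] by apply/eqP; rewrite -(eqn_modDr 1) !addn1; apply/eqP.
rewrite hp hp' expnS [r * r ^ e]mulnC.
have -> : p' %% r = s by lia.
exact: mod_mul_lift.
Qed.


Lemma size_morph_ext (A : Type) (mu : A -> seq A) r : uniform_morphism mu r ->
  forall u, size (morph_ext mu u) = r * size u.
Proof.
move=> Hu; elim=> [|b u IH]; first by rewrite muln0.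
by rewrite /morph_ext /= size_cat -/(morph_ext mu u) IH Hu mulnS.
Qed.

Lemma morph_iterS (A : Type) (mu : A -> seq A) n u :
  morph_iter mu n.+1 u = morph_ext mu (morph_iter mu n u).
Proof. by rewrite /morph_iter iterS. Qed.

Lemma size_iter (A : Type) (mu : A -> seq A) r : uniform_morphism mu r ->
  forall n u, size (morph_iter mu n u) = r ^ n * size u.
Proof.
move=> Hu; elim=> [|n IH] u; first by rewrite expn0 mul1n.
by rewrite morph_iterS (size_morph_ext Hu) IH expnS mulnA.
Qed.

Lemma nth_flat (A : Type) (mu : A -> seq A) r : uniform_morphism mu r ->
  forall u i j x0, i < size u -> j < r ->
  nth x0 (morph_ext mu u) (r * i + j) = nth x0 (mu (nth x0 u i)) j.
Proof.
move=> Hu; elim=> [|b u IH] i j x0 //= hi hj.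
rewrite /morph_ext /= nth_cat Hu -/(morph_ext mu u).
case: i hi => [|i] hi.
  by rewrite muln0 add0n hj.
have -> : (r * i.+1 + j < r) = false by apply/negbTE; rewrite -leqNgt mulnS; lia.
have -> : r * i.+1 + j - r = r * i + j by rewrite mulnS; lia.
exact: IH.
Qed.

Lemma FP1 (A : Type) (mu : A -> seq A) r a w : 2 <= r -> uniform_morphism mu r ->
  is_fixed_point_word mu a w -> forall m j, j < r -> w (r * m + j) = nth a (mu (w m)) j.
Proof.
move=> hr Hu Hw m j hj.
have hm : m < r ^ m by apply: ltn_expl.
have s1 : size (morph_iter mu m [:: a]) = r ^ m by rewrite (size_iter Hu) muln1.
rewrite (Hw m m); last by rewrite s1.
rewrite (Hw m.+1); last first.
  rewrite (size_iter Hu) muln1 expnS.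
  have : m.+1 <= r ^ m by [].
  move=> h; have : r * m.+1 <= r * r ^ m by rewrite leq_mul2l h orbT.
  rewrite mulnS; lia.
by rewrite morph_iterS (nth_flat Hu) // s1.
Qed.

Definition phi (A : Type) (mu : A -> seq A) e (b : A) := morph_iter mu e [:: b].

Lemma E1 (A : Type) (mu : A -> seq A) r a w : 2 <= r -> uniform_morphism mu r ->
  is_fixed_point_word mu a w -> forall e n i, i < r ^ e ->
  w (r ^ e * n + i) = nth a (phi mu e (w n)) i.
Proof.
move=> hr Hu Hw; elim=> [|e IH] n i hi.
  move: hi; rewrite expn0 => hi; have -> : i = 0 by lia.
  by rewrite mul1n addn0.
have r0 : 0 < r by lia.
have [i1 [j [hi' [hj _]]]] := decomp i r0.
have hi1 : i1 < r ^ e by rewrite -(ltn_pmul2r r0); move: hi; rewrite expnS; lia.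
rewrite /phi morph_iterS.
have -> : i = r * i1 + j by rewrite hi' mulnC.
rewrite (nth_flat Hu) //; last by rewrite (size_iter Hu) muln1.
rewrite -/(phi mu e (w n)) -IH //.
rewrite -(FP1 hr Hu Hw) //.
congr w; rewrite expnS mulnDr mulnA; lia.
Qed.

Lemma stab (A : finType) (mu : A -> seq A) :
  exists F, forall b c, phi mu F.+1 b = phi mu F.+1 c -> phi mu F b = phi mu F c.
Proof.
have mono : forall e b c, phi mu e b = phi mu e c -> phi mu e.+1 b = phi mu e.+1 c.
  by move=> e b c H; rewrite /phi !morph_iterS; congr (morph_ext mu _); exact: H.
pose S e := [set x : A * A | phi mu e x.1 == phi mu e x.2].
apply: NNPP => Hno.
have Hs : forall e, #|S e| < #|S e.+1|.
  move=> e; apply: proper_card; rewrite properE; apply/andP; split.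
    apply/subsetP => x; rewrite !inE => /eqP H; apply/eqP; exact: mono.
  apply/negP => /subsetP Hsub; apply: Hno; exists e => b c H.
  have := Hsub (b, c); rewrite !inE /= => h; apply/eqP; apply: h; apply/eqP; exact: H.
have He : forall e, e <= #|S e|.
  by elim=> // e IH; apply: leq_ltn_trans IH (Hs e).
have h2 := He #|[set: A * A]|.+1.
have h1 := subset_leq_card (subsetT (S #|[set: A * A]|.+1)).
by have := leq_trans h2 h1; rewrite ltnn.
Qed.


Lemma zprops (A : finType) (mu : A -> seq A) r a w F : 2 <= r -> uniform_morphism mu r ->
  is_fixed_point_word mu a w -> aperiodic w -> uniformly_recurrent w ->
  (forall b c, phi mu F.+1 b = phi mu F.+1 c -> phi mu F b = phi mu F c) ->
  let zz := fun n => phi mu F (w n) in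
  [/\ FPz zz r, INJz zz r, URz zz & aperiodic zz].
Proof.
move=> hr Hu Hw Hap Hur HF zz.
have r0 : 0 < r by lia.
have X0 : 0 < r ^ F by rewrite expn_gt0 r0.
have szz : forall b e, size (phi mu e b) = r ^ e by move=> b e; rewrite /phi (size_iter Hu) muln1.
have mono : forall e b c, phi mu e b = phi mu e c -> phi mu e.+1 b = phi mu e.+1 c.
  by move=> e b c H; rewrite /phi !morph_iterS; congr (morph_ext mu _); exact: H.
have key : forall n j i, j < r -> i < r ^ F ->
    w (r ^ F * (r * n + j) + i) = nth a (phi mu F.+1 (w n)) (r ^ F * j + i).
  move=> n j i hj hi; rewrite -(E1 hr Hu Hw); last first.
    have : r ^ F * j.+1 <= r ^ F * r by rewrite leq_mul2l hj orbT.
    rewrite expnS mulnS; lia.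
  congr w; rewrite expnS; lia.
split.
- move=> n n' j hj H; rewrite /zz.
  apply: (@eq_from_nth _ a); first by rewrite !szz.
  move=> i; rewrite szz => hi.
  rewrite -!(E1 hr Hu Hw) // !key //; congr nth; exact: mono.
- move=> n n' H; rewrite /zz; apply: HF.
  apply: (@eq_from_nth _ a); first by rewrite !szz.
  move=> i; rewrite szz => hi.
  have [j [i0 [hi' [hi0 _]]]] := decomp i X0.
  have hj : j < r by rewrite -(ltn_pmul2r X0); move: hi; rewrite expnS; lia.
  have -> : i = r ^ F * j + i0 by rewrite hi' mulnC.
  rewrite -!key // !(E1 hr Hu Hw) //.
  by have := H j hj; rewrite /zz => ->.
- move=> l; have [b Hb] := Hur l; exists b => i j.
  have [t [ht Ht]] := Hb i j; exists t; split => //.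
  move=> s hs; rewrite /zz.
  have Ht' : fac w (j + t) l = fac w i l := Ht.
  by rewrite (fac_eqf Ht').
- move=> [P [N [P0 HP]]]; apply: Hap.
  exists (r ^ F * P), (r ^ F * N); split; first by rewrite muln_gt0 X0.
  move=> m hm.
  have [u [i0 [hm' [hi0 _]]]] := decomp m X0.
  have hu : N <= u.
    case: (leqP N u) => // h; exfalso.
    have : u.+1 * r ^ F <= N * r ^ F by rewrite leq_mul2r h orbT.
    rewrite mulSn; lia.
  have -> : m + r ^ F * P = r ^ F * (u + P) + i0 by rewrite hm'; lia.
  rewrite hm' [u * _]mulnC !(E1 hr Hu Hw) //.
  by have := HP u hu; rewrite /zz => ->.
Qed.

Theorem theorem5 (A : finType) (mu : A -> seq A) (r : nat) (a : A) (w : nat -> A) :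
  2 <= r ->
  uniform_morphism mu r ->
  prolongable_on mu a ->
  is_fixed_point_word mu a w ->
  aperiodic w ->
  uniformly_recurrent w ->
  exists c : nat, forall k i : nat, 0 < k ->
    exists m : nat, 0 < m /\ m <= c * k /\ antipower_at w i k m.
Proof.
move=> hr Hu _ Hw Hap Hur.
have [F HF] := stab mu.
have [hFP hINJ hUR hAP] := zprops hr Hu Hw Hap Hur HF.
set zz := fun n => phi mu F (w n) in hFP hINJ hUR hAP.
have [L HL] := baseB hr hFP hUR hAP.
have HR := lift hr hINJ HL.
have HRw : forall e p p', eqf w p p' ((L + 2) * r ^ e - 2) -> p = p' %[mod r ^ e].
  move=> e p p' H; apply: HR => s hs; rewrite /zz H //.
exists ((L + 2) * r + 1) => k i k0.
pose e := up_log r k.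
have hk : k <= r ^ e by apply: up_logP.
have hk2 : r ^ e <= r * k.
  case: (ltnP 1 k) => h.
    have h1 := up_log_gtn hr h.
    have e0 : 0 < e by rewrite /e up_log_gt0 hr h.
    rewrite -(prednK e0) expnS leq_mul2l; apply/orP; right; exact: ltnW.
  rewrite /e; have -> : k = 1 by lia.
  by rewrite up_log1 expn0 muln1; lia.
exists ((L + 2) * r ^ e + 1); split; first by lia.
split.
  have : (L + 2) * r ^ e <= (L + 2) * (r * k) by rewrite leq_mul2l hk2 orbT.
  lia.
move=> j1 j2 h1 h2 hne Heq.
have Heq' : fac w (i + j1 * ((L + 2) * r ^ e + 1)) ((L + 2) * r ^ e + 1)
          = fac w (i + j2 * ((L + 2) * r ^ e + 1)) ((L + 2) * r ^ e + 1) := Heq.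
have := HRw e _ _ (eqf_le _ (fac_eqf Heq')).
move=> /(_ ltac:(lia)) /eqP; rewrite eqn_modDl !mulnDr !muln1 !mulnA !modnMDl.
by rewrite !modn_small; lia.
Qed.
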